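(* Let $A,B$ be finite-dimensional quantum systems with $\dim\mathcal H_A,\dim\mathcal H_B\ge 2$, and let $\rho_A,\rho_B$ be density matrices on $A$ and $B$ respectively. Let $\mathcal S_{AB}$ be the set of separable density matrices on $\mathcal H_A\otimes\mathcal H_B$, and let $\partial\mathcal S_{AB}$ denote its boundary (relative to the real affine space of trace-one Hermitian operators on $\mathcal H_A\otimes\mathcal H_B$). Then $$\rho_A\otimes\rho_B\in\partial\mathcal S_{AB}\iff \det\rho_A\,\det\rho_B=0 .$$
   Context: A density matrix is a positive semidefinite operator of unit trace. A bipartite state is separable if it is a convex combination of product states $\sigma_A\otimes\sigma_B$. A point of a set $S$ is internal if some ball of nonzero radius centred at it (within the ambient affine space) is contained in $S$; the boundary $\partial S$ is the set of non-internal points of $S$. *)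

(* Defs.v *)
(* Complex scalars: an arbitrary numClosedFieldType C
   (e.g. algC; the field of complex numbers is such a structure). *)
From HB Require Import structures.
From mathcomp Require Import all_boot all_order all_algebra.
Set Implicit Arguments. Unset Strict Implicit. Unset Printing Implicit Defensive.
Import Order.TTheory GRing.Theory Num.Theory.
Local Open Scope ring_scope.

Section QDefs.
Variable C : numClosedFieldType.

Definition adjmx m n (A : 'M[C]_(m, n)) : 'M[C]_(n, m) := (map_mx Num.conj A)^T.

Definition hermitian n (A : 'M[C]_n) : Prop := adjmx A = A.

Definition psd n (A : 'M[C]_n) : Prop :=
  hermitian A /\ forall v : 'cV[C]_n, 0 <= (adjmx v *m A *m v) 0 0.

Definition density n (A : 'M[C]_n) : Prop := psd A /\ \tr A = 1.

Definition kron m n (A : 'M[C]_m) (B : 'M[C]_n) : 'M[C]_(m * n) :=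
  \sum_(i : 'I_m) \sum_(j : 'I_n) \sum_(i' : 'I_m) \sum_(j' : 'I_n)
     (A i i' * B j j') *: delta_mx (mxvec_index i j) (mxvec_index i' j').

Definition separable m n (rho : 'M[C]_(m * n)) : Prop :=
  exists (k : nat) (w : 'I_k -> C) (sA : 'I_k -> 'M[C]_m) (sB : 'I_k -> 'M[C]_n),
    (forall i, 0 <= w i) /\ \sum_(i < k) w i = 1 /\
    (forall i, density (sA i)) /\ (forall i, density (sB i)) /\
    rho = \sum_(i < k) w i *: kron (sA i) (sB i).

Definition hsnorm2 N (X : 'M[C]_N) : C := \sum_(i < N) \sum_(j < N) `|X i j| ^+ 2.

(* internal point of S, relative to the affine space of trace-one Hermitian
   matrices: some ball of radius sqrt e > 0 around X in that space is in S *)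
Definition internal N (S : 'M[C]_N -> Prop) (X : 'M[C]_N) : Prop :=
  S X /\ exists e : C, 0 < e /\
    forall Y : 'M[C]_N, hermitian Y -> \tr Y = 1 -> hsnorm2 (Y - X) < e -> S Y.

Definition boundary N (S : 'M[C]_N -> Prop) (X : 'M[C]_N) : Prop :=
  S X /\ ~ internal S X.

End QDefs.

(* Main.v *)
Require Import Defs.
From HB Require Import structures.
From mathcomp Require Import all_boot all_order all_algebra.
From mathcomp Require Import ring lra.
Set Implicit Arguments. Unset Strict Implicit. Unset Printing Implicit Defensive.
Import Order.TTheory GRing.Theory Num.Theory.
Local Open Scope ring_scope.

Section H.
Variable C : numClosedFieldType.

Definition unidx m n (k : 'I_(m * n)) : 'I_m * 'I_n :=
  enum_val (cast_ord (esym (mxvec_cast m n)) k).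

Lemma unidxK m n (k : 'I_(m*n)) : mxvec_index (unidx k).1 (unidx k).2 = k.
Proof. by case/mxvec_indexP: k => i j; rewrite /unidx cast_ordK enum_rankK. Qed.

Lemma idxK m n (i : 'I_m) (j : 'I_n) : unidx (mxvec_index i j) = (i, j).
Proof. by rewrite /unidx cast_ordK enum_rankK. Qed.

Lemma sum_idx (V : nmodType) m n (F : 'I_(m*n) -> V) :
  \sum_(k < m * n) F k = \sum_(i < m) \sum_(j < n) F (mxvec_index i j).
Proof.
rewrite pair_big /=.
rewrite (reindex (uncurry (@mxvec_index m n))) /=; last first.
  exact: curry_mxvec_bij.
by apply: eq_bigr => -[i j].
Qed.

Lemma kronM m n (A : 'M[C]_m) (B : 'M[C]_n) :
  kron A B = \matrix_(r, s) (A (unidx r).1 (unidx s).1 * B (unidx r).2 (unidx s).2).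
Proof.
rewrite [RHS]matrix_sum_delta sum_idx /kron; apply: eq_bigr => i _.
apply: eq_bigr => j _; rewrite sum_idx; apply: eq_bigr => i' _.
by apply: eq_bigr => j' _; rewrite mxE !idxK.
Qed.

Lemma kronE m n (A : 'M[C]_m) (B : 'M[C]_n) i j i' j' :
  kron A B (mxvec_index i j) (mxvec_index i' j') = A i i' * B j j'.
Proof. by rewrite kronM mxE !idxK. Qed.


Definition qf n (A : 'M[C]_n) (v : 'cV[C]_n) : C := (adjmx v *m A *m v) 0 0.

Lemma qfE n (A : 'M[C]_n) v :
  qf A v = \sum_i \sum_j (Num.conj (v i 0)) * A i j * v j 0.
Proof.
rewrite /qf mxE exchange_big /=; apply: eq_bigr => i _.
rewrite mxE big_distrl /=; apply: eq_bigr => j _.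
by rewrite !mxE.
Qed.

Definition vkron m n (v : 'cV[C]_m) (w : 'cV[C]_n) : 'cV[C]_(m * n) :=
  \col_k (v (unidx k).1 0 * w (unidx k).2 0).

Lemma qf_kron m n (A : 'M[C]_m) (B : 'M[C]_n) v w :
  qf (kron A B) (vkron v w) = qf A v * qf B w.
Proof.
rewrite !qfE sum_idx big_distrl /=; apply: eq_bigr => i _.
rewrite big_distrr /=; apply: eq_bigr => j _.
rewrite sum_idx big_distrl /=; apply: eq_bigr => i' _.
rewrite big_distrr /=; apply: eq_bigr => j' _.
rewrite kronE !mxE !idxK /= rmorphM /=; ring.
Qed.

Lemma qfD n (A B : 'M[C]_n) v : qf (A + B) v = qf A v + qf B v.
Proof. by rewrite /qf mulmxDr mulmxDl mxE. Qed.

Lemma qfZ n (a : C) (A : 'M[C]_n) v : qf (a *: A) v = a * qf A v.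
Proof. by rewrite /qf -scalemxAr -scalemxAl mxE. Qed.

Lemma qf0 n (v : 'cV[C]_n) : qf 0 v = 0.
Proof. by rewrite /qf mulmx0 mul0mx mxE. Qed.

Lemma qfN n (A : 'M[C]_n) v : qf (- A) v = - qf A v.
Proof. by rewrite /qf mulmxN mulNmx mxE. Qed.

Lemma qf_sum n I (r : seq I) (P : pred I) (F : I -> 'M[C]_n) v :
  qf (\sum_(i <- r | P i) F i) v = \sum_(i <- r | P i) qf (F i) v.
Proof. by elim/big_rec2: _ => [|i x y _ <-]; rewrite ?qf0 ?qfD. Qed.

Lemma mxtrace_kron m n (A : 'M[C]_m) (B : 'M[C]_n) :
  \tr (kron A B) = \tr A * \tr B.
Proof.
rewrite /mxtrace sum_idx big_distrl /=; apply: eq_bigr => i _.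
by rewrite big_distrr /=; apply: eq_bigr => j _; rewrite kronE.
Qed.

Lemma adjmx_kron m n (A : 'M[C]_m) (B : 'M[C]_n) :
  adjmx (kron A B) = kron (adjmx A) (adjmx B).
Proof.
by apply/matrixP => r s; rewrite /adjmx !kronM !mxE rmorphM.
Qed.

Lemma hermitian_kron m n (A : 'M[C]_m) (B : 'M[C]_n) :
  Defs.hermitian A -> Defs.hermitian B -> Defs.hermitian (kron A B).
Proof. by move=> hA hB; rewrite /Defs.hermitian adjmx_kron hA hB. Qed.

Lemma idx_eq m n (i i' : 'I_m) (j j' : 'I_n) :
  (mxvec_index i j == mxvec_index i' j') = (i == i') && (j == j').
Proof.
apply/eqP/andP => [h|[/eqP-> /eqP->]] //.
by have := congr1 (@unidx m n) h; rewrite !idxK => -[-> ->].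
Qed.

Lemma kron11 m n : kron (1%:M : 'M[C]_m) (1%:M : 'M[C]_n) = 1%:M.
Proof.
apply/matrixP => r s; rewrite kronM mxE.
rewrite -[r]unidxK -[s]unidxK !idxK.
case: (unidx r) => i j; case: (unidx s) => i' j' /=.
rewrite !mxE idx_eq.
by case: (i == i'); case: (j == j'); rewrite /= ?mulr1 ?mulr0 ?mul0r.
Qed.


Lemma adjmxD m n (A B : 'M[C]_(m, n)) : adjmx (A + B) = adjmx A + adjmx B.
Proof. by apply/matrixP => i j; rewrite !mxE rmorphD. Qed.

Lemma adjmxZ m n (a : C) (A : 'M[C]_(m, n)) : adjmx (a *: A) = Num.conj a *: adjmx A.
Proof. by apply/matrixP => i j; rewrite !mxE rmorphM. Qed.

Lemma adjmxN m n (A : 'M[C]_(m, n)) : adjmx (- A) = - adjmx A.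
Proof. by apply/matrixP => i j; rewrite !mxE rmorphN. Qed.

Lemma adjmx1 n : adjmx (1%:M : 'M[C]_n) = 1%:M.
Proof. by apply/matrixP => i j; rewrite !mxE eq_sym conjC_nat. Qed.

Lemma adjmxK m n (A : 'M[C]_(m, n)) : adjmx (adjmx A) = A.
Proof. by apply/matrixP => i j; rewrite !mxE conjCK. Qed.

Lemma conj_real (x : C) : 0 <= x -> Num.conj x = x.
Proof. by move=> /ger0_real /CrealP. Qed.

Lemma density_qf n (A : 'M[C]_n) v : density A -> 0 <= qf A v.
Proof. by case=> -[_ h] _; exact: h. Qed.

Lemma separable_kron m n (A : 'M[C]_m) (B : 'M[C]_n) :
  density A -> density B -> separable (kron A B).
Proof.
move=> hA hB; exists 1%N, (fun _ => 1), (fun _ => A), (fun _ => B).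
split; first by move=> _; exact: ler01.
split; first by rewrite big_ord1.
split; first by [].
split; first by [].
by rewrite big_ord1 scale1r.
Qed.

Lemma separable_qf m n (rho : 'M[C]_(m * n)) v w :
  separable rho -> 0 <= qf rho (vkron v w).
Proof.
case=> k [wt [sA [sB [w0 [_ [hA [hB ->]]]]]]].
rewrite qf_sum; apply: sumr_ge0 => i _.
by rewrite qfZ qf_kron mulr_ge0 // mulr_ge0 // density_qf.
Qed.

Lemma qf1 n (u : 'cV[C]_n) : qf 1%:M u = \sum_i `|u i 0| ^+ 2.
Proof.
by rewrite /qf mulmx1 mxE; apply: eq_bigr => i _; rewrite !mxE normCKC.
Qed.

Lemma qf1_gt0 n (u : 'cV[C]_n) : u != 0 -> 0 < qf 1%:M u.
Proof.
move=> nz; rewrite qf1.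
have [i ui] : exists i, u i 0 != 0.
  apply/existsP; apply: contraR nz; rewrite negb_exists => /forallP h.
  apply/eqP/matrixP => i j; rewrite ord1 mxE; apply/eqP; move: (h i); by rewrite negbK.
rewrite (bigD1 i) //=; apply: ltr_pwDl.
  by rewrite exprn_gt0 // normr_gt0.
by apply: sumr_ge0 => j _; rewrite exprn_ge0.
Qed.

Lemma ker_vec n (A : 'M[C]_n) : \det A = 0 -> exists2 u : 'cV[C]_n, u != 0 & qf A u = 0.
Proof.
move=> /eqP /det0P [v nz vA]; exists (adjmx v).
  apply: contra nz => /eqP h; apply/eqP.
  by rewrite -(adjmxK v) h; apply/matrixP => i j; rewrite !mxE rmorph0.
by rewrite /qf adjmxK vA mul0mx mxE.
Qed.

Lemma hsnorm2_ge0 N (M : 'M[C]_N) : 0 <= hsnorm2 M.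
Proof. by apply: sumr_ge0 => i _; apply: sumr_ge0 => j _; rewrite exprn_ge0. Qed.

Lemma hsnorm2Z N (t : C) (M : 'M[C]_N) : 0 <= t -> hsnorm2 (t *: M) = t ^+ 2 * hsnorm2 M.
Proof.
move=> t0; rewrite /hsnorm2 big_distrr; apply: eq_bigr => i _.
rewrite big_distrr; apply: eq_bigr => j _.
by rewrite mxE normrM ger0_norm // exprMn.
Qed.


Lemma not_internal m n (A : 'M[C]_m) (B : 'M[C]_n) u w :
  (0 < m)%N -> (0 < n)%N -> density A -> density B -> u != 0 -> w != 0 ->
  qf A u * qf B w = 0 -> ~ internal (@separable C m n) (kron A B).
Proof.
move=> m0 n0 hA hB nu nw q0 [_ [e [e0 he]]].
set X := kron A B.
set N : C := (m * n)%:R.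
set M := X - N^-1 *: 1%:M.
set H := hsnorm2 M.
have H0 : 0 <= H := hsnorm2_ge0 M.
have D0 : 0 < 1 + e + H by rewrite ltr_wpDr // addr_gt0 // ltr01.
set t := e / (1 + e + H).
have t0 : 0 < t := divr_gt0 e0 D0.
have N0 : N != 0 by rewrite pnatr_eq0 -lt0n muln_gt0 m0 n0.
have Ni0 : 0 <= N^-1 by rewrite invr_ge0 ler0n.
have hX : Defs.hermitian X by apply: hermitian_kron; [case: hA => -[] | case: hB => -[]].
case: hA => _ trA; case: hB => _ trB.
have hY : Defs.hermitian (X + t *: M).
  rewrite /Defs.hermitian /M !(adjmxD, adjmxZ, adjmxN, adjmx1) hX.
  by rewrite !conj_real // ltW.
have tY : \tr (X + t *: M) = 1.
  rewrite /M !(mxtraceD, mxtraceZ, raddfB) /= raddfN /= mxtraceZ mxtrace1.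
  rewrite /X mxtrace_kron trA trB.
  by rewrite mulVf // mulr1 subrr mulr0 addr0.
have nY : hsnorm2 (X + t *: M - X) < e.
  have -> : X + t *: M - X = t *: M by rewrite addrC addKr.
  rewrite hsnorm2Z ?ltW //.
  rewrite expr2 -mulrA.
  have tH : t * H < e.
    rewrite /t mulrAC ltr_pdivrMr // mulrDr mulrDr mulr1.
    by apply: ltr_pwDl => //; rewrite addr_gt0 // mulr_gt0.
  apply: le_lt_trans tH; apply: ler_piMl; first by rewrite mulr_ge0 // ltW.
  by rewrite /t ler_pdivrMr // mul1r -addrA addrC -addrA ?lerDl ?lerDr addr_ge0 // ltW.
have /(separable_qf u w) := he _ hY tY nY.
rewrite qfD qfZ qfD qfN qfZ -kron11 !qf_kron q0.
set P := qf 1%:M u * qf 1%:M w.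
have P0 : 0 < P by rewrite mulr_gt0 // qf1_gt0.
rewrite add0r sub0r mulrN => h.
have : 0 < t * (N^-1 * P).
  by rewrite mulr_gt0 // mulr_gt0 // invr_gt0 ltr0n muln_gt0 m0 n0.
by rewrite -oppr_lt0 => /lt_le_trans /(_ h); rewrite ltxx.
Qed.


Lemma tstar_adj m n (A : 'M[C]_(m, n)) : map_mx Num.conj (A^T) = adjmx A.
Proof. by rewrite /adjmx map_trmx. Qed.

Lemma adjmx_mul m n p (A : 'M[C]_(m, n)) (B : 'M[C]_(n, p)) :
  adjmx (A *m B) = adjmx B *m adjmx A.
Proof. by rewrite /adjmx map_mxM trmx_mul. Qed.

Lemma qf_diag n (d : 'rV[C]_n) u : qf (diag_mx d) u = \sum_i d 0 i * `|u i 0| ^+ 2.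
Proof.
rewrite /qf mul_mx_diag mxE; apply: eq_bigr => i _.
by rewrite !mxE normCKC mulrAC mulrC.
Qed.

Lemma pd_margin n (A : 'M[C]_n) : (0 < n)%N -> density A -> \det A != 0 ->
  exists2 l, 0 < l & forall v, l * qf 1%:M v <= qf A v.
Proof.
move=> n0 [[hA psdA] _] dA.
have Anormal : A \is normalmx.
  by apply/normalmxP; rewrite tstar_adj hA.
have Aeq := orthomx_spectralP Anormal.
set P := spectralmx A in Aeq; set d := spectral_diag A in Aeq.
have Pu : P \is unitarymx := spectral_unitarymx A.
have PQ : P *m adjmx P = 1%:M by rewrite -tstar_adj; exact/unitarymxP.
have QP : adjmx P *m P = 1%:M by apply: mulmx1C.
have Aeq' : A = adjmx P *m diag_mx d *m P by rewrite Aeq invmx_unitary // tstar_adj.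
have qfA v : qf A v = qf (diag_mx d) (P *m v).
  by rewrite /qf Aeq' adjmx_mul !mulmxA.
have qf1P v : qf 1%:M v = qf 1%:M (P *m v).
  by rewrite /qf !mulmx1 adjmx_mul -mulmxA (mulmxA (adjmx P)) QP mul1mx.
have dge0 i : 0 <= d 0 i.
  have := psdA (adjmx P *m delta_mx i 0); rewrite -/(qf A _) qfA mulmxA PQ mul1mx.
  rewrite qf_diag (bigD1 i) //= big1 ?addr0 => [|j ji]; last first.
    by rewrite mxE (negbTE ji) /= normr0 expr0n mulr0.
  by rewrite mxE !eqxx normr1 expr1n mulr1.
have dne0 i : d 0 i != 0.
  move: dA; rewrite Aeq' !det_mulmx det_diag mulrAC -det_mulmx QP det1 mul1r.
  by move/prodf_neq0 => /(_ i isT).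
have dgt0 i : 0 < d 0 i by rewrite lt_def dne0 dge0.
set S := \sum_i (d 0 i)^-1.
have S0 : 0 < S.
  rewrite /S (bigD1 (Ordinal n0)) //= ltr_pwDl ?invr_gt0 //.
  by apply: sumr_ge0 => j _; rewrite invr_ge0.
exists S^-1; first by rewrite invr_gt0.
move=> v; rewrite qfA qf1P qf_diag qf1 mulr_sumr; apply: ler_sum => i _.
apply: ler_wpM2r; first by rewrite exprn_ge0.
rewrite -div1r ler_pdivrMr // -(mulfV (dne0 i)) ler_wpM2l //.
by rewrite /S (bigD1 i) //= lerDl sumr_ge0 // => j _; rewrite invr_ge0.
Qed.


Lemma qf_delta n (v : 'cV[C]_n) i i' :
  qf (delta_mx i i') v = Num.conj (v i 0) * v i' 0.
Proof.
rewrite qfE (bigD1 i) //= (bigD1 i') //= !mxE !eqxx /= mulr1.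
rewrite big1 ?addr0; last by move=> j ji; rewrite mxE eqxx (negbTE ji) mulr0 mul0r.
rewrite big1 ?addr0 // => j ji; apply: big1 => k _.
by rewrite mxE (negbTE ji) /= mulr0 mul0r.
Qed.

Lemma qf_e n (M : 'M[C]_n) k : qf M (delta_mx k 0) = M k k.
Proof.
rewrite qfE (bigD1 k) //= (bigD1 k) //= !mxE !eqxx /= mulr1 conjC1 mul1r.
rewrite big1 ?addr0; last by move=> j jk; rewrite mxE (negbTE jk) mulr0.
rewrite big1 ?addr0 // => j jk; apply: big1 => i _.
by rewrite mxE (negbTE jk) /= conjC0 !mul0r.
Qed.

Lemma adjmx_delta n (i i' : 'I_n) : adjmx (delta_mx i i' : 'M[C]_n) = delta_mx i' i.
Proof. by apply/matrixP => a b; rewrite !mxE conjC_nat andbC. Qed.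

Lemma normsq_le_s n (v : 'cV[C]_n) i : `|v i 0| ^+ 2 <= qf 1%:M v.
Proof.
rewrite qf1 (bigD1 i) //= lerDl; apply: sumr_ge0 => j _; exact: exprn_ge0.
Qed.

Lemma pert n (A : 'M[C]_n) l (i i' : 'I_n) (b : C) :
  Defs.hermitian A -> 0 < l -> (forall v, l * qf 1%:M v <= qf A v) ->
  4%:R * `|b| <= l ->
  Defs.hermitian (A + b *: delta_mx i i' + Num.conj b *: delta_mx i' i) /\
  (forall v, l / 2%:R * qf 1%:M v <=
     qf (A + b *: delta_mx i i' + Num.conj b *: delta_mx i' i) v).
Proof.
move=> hA l0 hl hb; split.
  rewrite /Defs.hermitian !adjmxD !adjmxZ !adjmx_delta hA conjCK.
  by rewrite addrAC -addrA [X in A + X]addrC addrA.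
move=> v; set s := qf 1%:M v.
have s0 : 0 <= s by rewrite /s qf1 sumr_ge0 // => j _; rewrite exprn_ge0.
rewrite !qfD !qfZ !qf_delta.
set w := b * (Num.conj (v i 0) * v i' 0).
have -> : Num.conj b * (Num.conj (v i' 0) * v i 0) = Num.conj w.
  by rewrite /w !rmorphM /= conjCK [X in _ = _ * X]mulrC.
have wR : w + Num.conj w \is Num.real.
  by apply/CrealP; rewrite rmorphD /= conjCK addrC.
have hw : `|w + Num.conj w| <= l / 2%:R * s.
  apply: le_trans (ler_normD _ _) _.
  rewrite norm_conjC -mulr2n /w !normrM norm_conjC.
  have hv : `|v i 0| * `|v i' 0| <= s.
    case/orP: (ger_leVge (normr_ge0 (v i 0)) (normr_ge0 (v i' 0))) => h.
      apply: le_trans (normsq_le_s v i'); rewrite expr2; exact: ler_wpM2r.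
    apply: le_trans (normsq_le_s v i); rewrite expr2; exact: ler_wpM2l.
  apply: (@le_trans _ _ ((`|b| * s) *+ 2)).
    by rewrite lerMn2r /= ler_wpM2l.
  have -> : l / 2%:R * s = (l / 4%:R * s) *+ 2.
    by rewrite -mulr_natr; field; rewrite ?pnatr_eq0.
  rewrite lerMn2r /= ler_wpM2r // ler_pdivlMr ?ltr0n // mulrC //.
have := hl v; rewrite -/s => hAv.
move/(real_ler_normlP wR): hw => [hw1 _].
have : l * s + - (l / 2%:R * s) <= qf A v + (w + Num.conj w).
  by apply: lerD => //; rewrite lerNl.
have -> : l * s + - (l / 2%:R * s) = l / 2%:R * s by field.
by rewrite addrA.
Qed.


Lemma tr_pos n (P : 'M[C]_n) l : (0 < n)%N -> 0 < l ->
  (forall v, l * qf 1%:M v <= qf P v) -> 0 < \tr P.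
Proof.
move=> n0 l0 h.
have hk k : 0 < P k k.
  by have := h (delta_mx k 0); rewrite !qf_e mxE eqxx mulr1 => /(lt_le_trans l0).
rewrite /mxtrace (bigD1 (Ordinal n0)) //= ltr_pwDl //.
by apply: sumr_ge0 => k _; apply: ltW.
Qed.

Lemma kronZl m n a (A : 'M[C]_m) (B : 'M[C]_n) : kron (a *: A) B = a *: kron A B.
Proof. by apply/matrixP => r s; rewrite !kronM !mxE mulrA. Qed.

Lemma kronZr m n a (A : 'M[C]_m) (B : 'M[C]_n) : kron A (a *: B) = a *: kron A B.
Proof. by apply/matrixP => r s; rewrite !kronM !mxE mulrCA. Qed.

Lemma kronDl m n (A A' : 'M[C]_m) (B : 'M[C]_n) : kron (A + A') B = kron A B + kron A' B.
Proof. by apply/matrixP => r s; rewrite !kronM !mxE mulrDl. Qed.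

Lemma kronDr m n (A : 'M[C]_m) (B B' : 'M[C]_n) : kron A (B + B') = kron A B + kron A B'.
Proof. by apply/matrixP => r s; rewrite !kronM !mxE mulrDr. Qed.

Lemma sum_enum (V : nmodType) (T : finType) (F : T -> V) :
  \sum_(i < #|T|) F (enum_val i) = \sum_x F x.
Proof.
rewrite [RHS](reindex (@enum_val T predT)) //.
by exists enum_rank => [i _|x _]; rewrite ?enum_valK ?enum_rankK.
Qed.

Definition goodP n (P : 'M[C]_n) := 
  Defs.hermitian P /\ (forall v, 0 <= qf P v) /\ 0 < \tr P.

Lemma goodP_density n (P : 'M[C]_n) : goodP P -> density ((\tr P)^-1 *: P).
Proof.
move=> [hP [qP tP]]; have ti : 0 <= (\tr P)^-1 by rewrite invr_ge0 ltW.
split; last by rewrite mxtraceZ mulVf // gt_eqF.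
split; first by rewrite /Defs.hermitian adjmxZ hP conj_real.
by move=> v; rewrite -/(qf _ _) qfZ mulr_ge0.
Qed.

Lemma separable_PQ m n (T : finType) (w0 : T -> C) (P : T -> 'M[C]_m)
  (Q : T -> 'M[C]_n) rho :
  (forall x, 0 < w0 x) -> (forall x, goodP (P x)) -> (forall x, goodP (Q x)) ->
  rho = \sum_x w0 x *: kron (P x) (Q x) -> \tr rho = 1 -> separable rho.
Proof.
move=> w0p hP hQ rhoE tr1.
have trP x : 0 < \tr (P x) by case: (hP x) => _ [].
have trQ x : 0 < \tr (Q x) by case: (hQ x) => _ [].
pose W x := w0 x * \tr (P x) * \tr (Q x).
exists #|T|, (fun i => W (enum_val i)),
  (fun i => (\tr (P (enum_val i)))^-1 *: P (enum_val i)),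
  (fun i => (\tr (Q (enum_val i)))^-1 *: Q (enum_val i)).
split; first by move=> i; rewrite /W !mulr_ge0 // ltW.
split.
  rewrite (sum_enum (fun x => W x)) -tr1 rhoE raddf_sum /=.
  by apply: eq_bigr => x _; rewrite mxtraceZ mxtrace_kron /W mulrA.
split; first by move=> i; apply: goodP_density.
split; first by move=> i; apply: goodP_density.
rewrite (sum_enum (fun x => W x *: kron ((\tr (P x))^-1 *: P x) ((\tr (Q x))^-1 *: Q x))).
rewrite rhoE; apply: eq_bigr => x _.
rewrite kronZl kronZr !scalerA; congr (_ *: _).
rewrite /W /=; field; apply/andP; split; [exact: lt0r_neq0 (trQ x) | exact: lt0r_neq0 (trP x)].
Qed.


Definition cv (k : 'I_4) : C := nth 0 [:: 1; -1; 'i; -'i] k.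

Lemma scal4 (a x y b p q z t : C) : t != 0 -> Num.conj t = t ->
  \sum_(k < 4) (a + t * cv k * x + Num.conj (t * cv k) * y) *
     (b + Num.conj (cv k) * z / t * p + Num.conj (Num.conj (cv k) * z / t) * q)
  = 4%:R * (a * b + z * x * p + Num.conj z * y * q).
Proof.
move=> ht tR.
rewrite !big_ord_recr big_ord0 /cv /= add0r.
rewrite !(rmorphM, rmorphN, fmorphV, rmorph1) /= ?conjCi ?conjCK ?opprK tR.
apply/eqP; rewrite -subr_eq0; apply/eqP.
transitivity (('i ^+ 2 + 1) * 2%:R * (x * Num.conj z * q + y * z * p - z * x * p - Num.conj z * y * q)).
  by rewrite !rmorphN /= !conjCi !opprK; field.
by rewrite sqrCi addNr !mul0r.
Qed.


Lemma sum4 m n (A : 'M[C]_m) (B : 'M[C]_n) i i' j j' (t z : C) :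
  t != 0 -> Num.conj t = t ->
  \sum_(k < 4) kron (A + (t * cv k) *: delta_mx i i' + Num.conj (t * cv k) *: delta_mx i' i)
     (B + (Num.conj (cv k) * z / t) *: delta_mx j j'
        + Num.conj (Num.conj (cv k) * z / t) *: delta_mx j' j)
  = 4%:R *: (kron A B + z *: kron (delta_mx i i') (delta_mx j j')
              + Num.conj z *: kron (delta_mx i' i) (delta_mx j' j)).
Proof.
move=> ht tR; apply/matrixP => r s; rewrite summxE.
under eq_bigr => k _ do rewrite kronM !mxE.
by rewrite scal4 // !kronM !mxE !mulrA.
Qed.

Lemma kron_delta m n (a b : 'I_(m * n)) :
  kron (delta_mx (unidx a).1 (unidx b).1 : 'M[C]_m) (delta_mx (unidx a).2 (unidx b).2 : 'M[C]_n)
  = delta_mx a b.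
Proof.
apply/matrixP => r s; rewrite kronM !mxE.
rewrite -{3}[r]unidxK -{3}[s]unidxK -{3}[a]unidxK -{3}[b]unidxK !idx_eq.
by case: (_ == _); case: (_ == _); case: (_ == _); case: (_ == _);
  rewrite /= ?mulr1 ?mulr0 ?mul0r.
Qed.


Definition PA m n (A : 'M[C]_m) (t : C) (p : 'I_(m * n) * 'I_(m * n)) (k : 'I_4) :=
  A + (t * cv k) *: delta_mx (unidx p.1).1 (unidx p.2).1
    + Num.conj (t * cv k) *: delta_mx (unidx p.2).1 (unidx p.1).1.

Definition PB m n (B : 'M[C]_n) (t z : C) (p : 'I_(m * n) * 'I_(m * n)) (k : 'I_4) :=
  B + (Num.conj (cv k) * z / t) *: delta_mx (unidx p.1).2 (unidx p.2).2
    + Num.conj (Num.conj (cv k) * z / t) *: delta_mx (unidx p.2).2 (unidx p.1).2.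

Lemma decomp m n (A : 'M[C]_m) (B : 'M[C]_n) (t : C) (Z : 'M[C]_(m * n)) :
  (0 < m)%N -> (0 < n)%N ->
  t != 0 -> Num.conj t = t -> Defs.hermitian Z ->
  \sum_(p : 'I_(m * n) * 'I_(m * n)) \sum_(k < 4)
     (4%:R * (m * n * (m * n))%:R)^-1 *:
       kron (@PA m n A t p k) (@PB m n B t ((m * n * (m * n))%:R / 2%:R * Z p.1 p.2) p k)
  = kron A B + Z.
Proof.
move=> m0 n0 t0 tR hZ.
set K : C := (m * n * (m * n))%:R.
have K0 : K != 0 by rewrite pnatr_eq0 -lt0n !muln_gt0 m0 n0.
have f4 : (4%:R : C) != 0 by rewrite pnatr_eq0.
have f2 : (2%:R : C) != 0 by rewrite pnatr_eq0.
set z := fun p : 'I_(m * n) * 'I_(m * n) => K / 2%:R * Z p.1 p.2.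
have step p : \sum_(k < 4) (4%:R * K)^-1 *: kron (@PA m n A t p k) (@PB m n B t (z p) p k)
   = K^-1 *: kron A B + (K^-1 * z p) *: delta_mx p.1 p.2
      + (K^-1 * Num.conj (z p)) *: delta_mx p.2 p.1.
  rewrite -scaler_sumr /PA /PB sum4 // !kron_delta scalerA !scalerDr !scalerA.
  by congr (_ *: _ + _ *: _ + _ *: _); field; rewrite !pnatr_eq0 -!lt0n m0 n0.
rewrite (eq_bigr _ (fun p _ => step p)) !big_split /=.
rewrite sumr_const card_prod !card_ord scalerMnl -mulr_natr mulVf // scale1r.
rewrite -addrA; congr (_ + _).
have -> : \sum_(p : 'I_(m * n) * 'I_(m * n)) (K^-1 * z p) *: delta_mx p.1 p.2
   = 2%:R^-1 *: Z.
  rewrite -(pair_bigA _ (fun a b => (K^-1 * z (a, b)) *: delta_mx a b)) /=.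
  rewrite [in RHS](matrix_sum_delta Z) scaler_sumr; apply: eq_bigr => a _.
  rewrite scaler_sumr; apply: eq_bigr => b _; rewrite scalerA /z /=.
  by rewrite mulrA mulrA mulVf // mul1r.
have -> : \sum_(p : 'I_(m * n) * 'I_(m * n)) (K^-1 * Num.conj (z p)) *: delta_mx p.2 p.1
   = 2%:R^-1 *: Z.
  rewrite -(pair_bigA _ (fun a b => (K^-1 * Num.conj (z (a, b))) *: delta_mx b a)) /=.
  rewrite exchange_big /=.
  rewrite [in RHS](matrix_sum_delta Z) scaler_sumr; apply: eq_bigr => a _.
  rewrite scaler_sumr; apply: eq_bigr => b _; rewrite scalerA /z /=.
  rewrite !rmorphM fmorphV /= !conjC_nat.
  have -> : Num.conj (Z b a) = Z a b.
    by have := congr1 (fun M : 'M[C]_(m * n) => M a b) (hZ : adjmx Z = Z); rewrite /= !mxE.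
  by congr (_ *: _); rewrite mulrA mulrA mulVf // mul1r.
by rewrite -scalerDl -[RHS]scale1r; congr (_ *: _); field.
Qed.


Lemma normcv k : `|cv k| = 1.
Proof.
case: k => -[|[|[|[|k]]]] hk //=; rewrite /cv /= ?normrN ?normr1 ?normCi //.
Qed.

Lemma goodP_of n (P : 'M[C]_n) l : (0 < n)%N -> 0 < l ->
  Defs.hermitian P -> (forall v, l * qf 1%:M v <= qf P v) -> goodP P.
Proof.
move=> n0 l0 hP hl; split => //; split; last exact: tr_pos n0 l0 hl.
move=> v; apply: le_trans (hl v); apply: mulr_ge0; first exact: ltW.
by rewrite qf1 sumr_ge0 // => j _; rewrite exprn_ge0.
Qed.

Lemma internal_kron m n (A : 'M[C]_m) (B : 'M[C]_n) :
  (0 < m)%N -> (0 < n)%N -> density A -> density B ->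
  \det A != 0 -> \det B != 0 -> internal (@separable C m n) (kron A B).
Proof.
move=> m0 n0 hA hB dA dB.
split; first exact: separable_kron.
have [lA lA0 hlA] := pd_margin m0 hA dA.
have [lB lB0 hlB] := pd_margin n0 hB dB.
have hAh : Defs.hermitian A by case: hA => -[].
have hBh : Defs.hermitian B by case: hB => -[].
set t := lA / 4%:R.
have t0 : 0 < t by rewrite divr_gt0 // ltr0n.
have tR : Num.conj t = t by rewrite conj_real // ltW.
set K : C := (m * n * (m * n))%:R.
have K0 : 0 < K by rewrite ltr0n !muln_gt0 m0 n0.
set d := lB * t / (2%:R * K).
have d0 : 0 < d by apply: divr_gt0; apply: mulr_gt0 => //; rewrite ltr0n.
exists (d ^+ 2); split; first by rewrite exprn_gt0.
move=> Y hY trY nY.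
set Z := Y - kron A B.
have hZ : Defs.hermitian Z.
  by rewrite /Defs.hermitian /Z adjmxD adjmxN hY (hermitian_kron hAh hBh).
have zb a b : `|Z a b| <= d.
  have h1 : `|Z a b| ^+ 2 <= hsnorm2 Z.
    rewrite /hsnorm2 (bigD1 a) //= (bigD1 b) //= -addrA lerDl.
    apply: addr_ge0; first by apply: sumr_ge0 => j _; rewrite exprn_ge0.
    by apply: sumr_ge0 => i _; apply: sumr_ge0 => j _; rewrite exprn_ge0.
  have := le_lt_trans h1 nY.
  rewrite ltr_pXn2r ?nnegrE ?normr_ge0 ?(ltW d0) //; exact: ltW.
apply: (@separable_PQ m n _ (fun _ => (4%:R * K)^-1)
   (fun x => @PA m n A t x.1 x.2)
   (fun x => @PB m n B t (K / 2%:R * Z x.1.1 x.1.2) x.1 x.2)).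
- by move=> _; rewrite invr_gt0 mulr_gt0 // ltr0n.
- move=> x.
  have hb : 4%:R * `|t * cv x.2| <= lA.
    by rewrite normrM normcv mulr1 gtr0_norm // /t mulrC divfK // pnatr_eq0.
  have [h1 h2] := @pert m A lA (unidx x.1.1).1 (unidx x.1.2).1 (t * cv x.2)
     hAh lA0 hlA hb.
  by apply: goodP_of m0 _ h1 h2; rewrite divr_gt0 // ltr0n.
- move=> x.
  have hb : 4%:R * `|Num.conj (cv x.2) * (K / 2%:R * Z x.1.1 x.1.2) / t| <= lB.
    have K2 : 0 < K / 2%:R by rewrite divr_gt0 // ltr0n.
    rewrite normrM normfV normrM norm_conjC normcv mul1r normrM (gtr0_norm t0) (gtr0_norm K2).
    idtac.
    have -> : 4%:R * (K / 2%:R * `|Z x.1.1 x.1.2| / t) = (2%:R * K / t) * `|Z x.1.1 x.1.2|.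
      by field; rewrite gt_eqF.
    apply: le_trans (ler_wpM2l _ (zb _ _)) _.
      by rewrite ltW // divr_gt0 // mulr_gt0 // ltr0n.
    have -> : 2%:R * K / t * d = lB.
      rewrite /d; move: (gt_eqF t0) (gt_eqF K0); clearbody K t => tn Kn.
      by field; rewrite ?tn ?Kn ?pnatr_eq0.
    by [].
  have [h1 h2] := @pert n B lB (unidx x.1.1).2 (unidx x.1.2).2
     (Num.conj (cv x.2) * (K / 2%:R * Z x.1.1 x.1.2) / t) hBh lB0 hlB hb.
  by apply: goodP_of n0 _ h1 h2; rewrite divr_gt0 // ltr0n.
- have := @decomp m n A B t Z m0 n0 (lt0r_neq0 t0) tR hZ; rewrite pair_bigA /= => ->.
  by rewrite /Z addrC subrK.
- exact: trY.
Qed.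

End H.

Unset Implicit Arguments.

Theorem mainTheorem1 (C : numClosedFieldType) (m n : nat)
  (hm : (2 <= m)%N) (hn : (2 <= n)%N)
  (rhoA : 'M[C]_m) (rhoB : 'M[C]_n)
  (hA : density rhoA) (hB : density rhoB) :
  boundary (@separable C m n) (kron rhoA rhoB) <-> \det rhoA * \det rhoB = 0.
Proof.
have m0 : (0 < m)%N by apply: leq_trans hm.
have n0 : (0 < n)%N by apply: leq_trans hn.
have e_nz k (i : 'I_k) : (delta_mx i 0 : 'cV[C]_k) != 0.
  apply/eqP => /matrixP /(_ i 0); rewrite !mxE !eqxx /= => /eqP.
  by rewrite oner_eq0.
split.
  move=> [_ nint]; apply/eqP; rewrite mulf_eq0; apply: contraT.
  rewrite negb_or => /andP [dA dB]; exfalso; apply: nint.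
  exact: internal_kron.
move=> /eqP; rewrite mulf_eq0 => /orP [] /eqP d0.
  split; first exact: separable_kron.
  have [u nu qu] := ker_vec d0.
  apply: (@not_internal C m n rhoA rhoB u (delta_mx (Ordinal n0) 0)) => //.
    exact: e_nz.
  by rewrite qu mul0r.
split; first exact: separable_kron.
have [w nw qw] := ker_vec d0.
apply: (@not_internal C m n rhoA rhoB (delta_mx (Ordinal m0) 0) w) => //.
  exact: e_nz.
by rewrite qw mulr0.
Qed.
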